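(* Under the standing setup below, let $y\in\mathbb Y$ be such that $\mathbf Ax=y$ is solvable in $\operatorname{dom}(\mathcal{Q})$. Let $(\delta_n)_{n\in\mathbb N}\subseteq(0,\infty)$ with $\delta_n\to0$, and let $(y_n)_{n\in\mathbb N}\subseteq\mathbb Y$ satisfy $\|y-y_n\|\le\delta_n$. Write $\mathcal{R}_n:=\mathcal{R}_{\delta_n}$ and $\boldsymbol\Phi_n:=\boldsymbol\Phi_{\theta(\delta_n)}$, and choose $x_n\in\operatorname{argmin}\{\mathcal{R}_n(z)\mid \|\mathbf Az-y_n\|\le\delta_n\}$. Then: (i) $(x_n)_{n\in\mathbb N}$ has at least one weak accumulation point; (ii) the weak limit $x^+$ of every weakly convergent subsequence $(x_{n(k)})_{k\in\mathbb N}$ is an $\mathcal{R}$-minimizing solution of $\mathbf Ax=y$, and $\mathcal{R}_{n(k)}(x_{n(k)})\to\mathcal{R}(x^+)$ as $k\to\infty$; (iii) if the $\mathcal{R}$-minimizing solution $x^+$ of $\mathbf Ax=y$ is unique, then $x_n\rightharpoonup x^+$ weakly and $\mathcal{R}_n(x_n)\to\mathcal{R}(x^+)$ as $n\to\infty$.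
   Context: Standing setup: $\mathbb X,\mathbb Y$ are real Hilbert spaces and $\mathbf A\colon\mathbb X\to\mathbb Y$ is a bounded linear operator (possibly with non-trivial kernel). Fix $\lambda>0$. Let $\boldsymbol\Phi\colon\mathbb X\to\mathbb X$ and, for each $\delta>0$, $\boldsymbol\Phi_{\theta(\delta)}\colon\mathbb X\to\mathbb X$ be maps (neural networks), and let $\mathcal{Q}\colon\mathbb X\to[0,\infty]$. Define $\mathcal{R}_\delta(x)=\tfrac12\|\boldsymbol\Phi_{\theta(\delta)}(x)-x\|^2+\lambda\mathcal{Q}(x)$ and $\mathcal{R}(x)=\tfrac12\|\boldsymbol\Phi(x)-x\|^2+\lambda\mathcal{Q}(x)$. Standing assumptions: (A1) $\boldsymbol\Phi$ and all $\boldsymbol\Phi_{\theta(\delta)}$ are weakly (sequentially) continuous; (A2) $\boldsymbol\Phi_{\theta(\delta)}\to\boldsymbol\Phi$ weakly uniformly on bounded sets as $\delta\to0$, meaning that for every bounded $B\subseteq\mathbb X$ and every $h\in\mathbb X$, $\sup_{x\in B}|\langle\boldsymbol\Phi_{\theta(\delta)}(x)-\boldsymbol\Phi(x),h\rangle|\to0$ as $\delta\to0$; (A3) $\boldsymbol\Phi_{\theta(\delta)}(x)\to\boldsymbol\Phi(x)$ in norm as $\delta\to0$ for every $\mathcal{R}$-minimizing solution $x$ of $\mathbf Ax=y$; (A4) $\mathcal{Q}$ is proper, coercive and weakly lower semicontinuous. An $\mathcal{R}$-minimizing solution of $\mathbf Ax=y$ is any element of $\operatorname{argmin}\{\mathcal{R}(x)\mid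 \mathbf Ax=y\}$. *)

(* Defs.v *)
From HB Require Import structures.
From mathcomp Require Import all_boot all_order all_algebra.
From mathcomp Require Import all_classical all_reals all_analysis.
Set Implicit Arguments. Unset Strict Implicit. Unset Printing Implicit Defensive.
Import Order.TTheory GRing.Theory Num.Theory.
Import numFieldNormedType.Exports.
Local Open Scope classical_set_scope.
Local Open Scope ring_scope.

(* A real inner product on a normed space, inducing its norm.
   A real Hilbert space is a complete normed space (completeNormedModType R)
   equipped with such an inner product. *)
Record inner_product (R : realType) (V : normedModType R) := InnerProduct {
  ip :> V -> V -> R;
  ip_sym : forall x y, ip x y = ip y x;
  ip_linear_l : forall (a : R) (x y z : V), ip (a *: x + y) z = a * ip x z + ip y z;
  ip_norm : forall x, ip x x = `|x| ^+ 2
}.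

Section Defs.
Context (R : realType) (V : normedModType R) (IP : inner_product V).

Definition weak_cvg (u : nat -> V) (x : V) : Prop :=
  forall h : V, (fun n => IP (u n) h) @ \oo --> IP x h.

Definition weak_acc_point (u : nat -> V) (x : V) : Prop :=
  exists phi : nat -> nat, {homo phi : m n / (m < n)%N >-> (m < n)%N} /\
    weak_cvg (u \o phi) x.

Definition weakly_seq_continuous (F : V -> V) : Prop :=
  forall (u : nat -> V) (x : V), weak_cvg u x -> weak_cvg (F \o u) (F x).

Definition bounded_set_V (B : set V) : Prop :=
  exists M : R, forall x, B x -> `|x| <= M.

Definition weakly_unif_cvg_bounded (Fd : R -> V -> V) (F : V -> V) : Prop :=
  forall (B : set V), bounded_set_V B -> forall (h : V) (eps : R), 0 < eps ->
    exists d0 : R, 0 < d0 /\ forall d : R, 0 < d -> d < d0 ->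
      forall x, B x -> `| IP (Fd d x - F x) h | <= eps.

Definition Q_proper (Q : V -> \bar R) : Prop :=
  (forall x, (0 <= Q x)%E) /\ exists x, (Q x < +oo)%E.

Definition Q_coercive (Q : V -> \bar R) : Prop :=
  forall M : R, exists r : R, forall x, r < `|x| -> (M%:E <= Q x)%E.

Definition weakly_lsc (Q : V -> \bar R) : Prop :=
  forall (u : nat -> V) (x : V), weak_cvg u x -> (Q x <= limn_einf (Q \o u))%E.

Definition regul (Phi : V -> V) (lambda : R) (Q : V -> \bar R) (x : V) : \bar R :=
  ((2^-1 * `|Phi x - x| ^+ 2)%:E + lambda%:E * Q x)%E.

End Defs.

Definition bounded_linear (R : realType) (X Y : normedModType R) (A : X -> Y) : Prop :=
  linear A /\ exists C : R, forall x, `|A x| <= C * `|x|.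

Definition min_solution (R : realType) (X Y : normedModType R)
  (A : X -> Y) (y : Y) (Reg : X -> \bar R) (x : X) : Prop :=
  A x = y /\ forall z, A z = y -> (Reg x <= Reg z)%E.

(* Main.v *)
Require Import Defs.
From HB Require Import structures.
From mathcomp Require Import all_boot all_order all_algebra.
From mathcomp Require Import all_classical all_reals all_analysis.
From mathcomp Require Import ring lra zify.
Import Order.TTheory GRing.Theory Num.Theory.
Import numFieldNormedType.Exports.
Local Open Scope classical_set_scope.
Local Open Scope ring_scope.
Set Implicit Arguments. Unset Strict Implicit. Unset Printing Implicit Defensive.

Section Hil.
Context (R : realType) (V : normedModType R) (IP : inner_product V).

Lemma ip0l z : IP 0 z = 0.
Proof.
have := ip_linear_l IP 1 0 0 z; rewrite scale1r addr0 mul1r => h; lra.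
Qed.
Lemma ipDl x y z : IP (x + y) z = IP x z + IP y z.
Proof. by have := ip_linear_l IP 1 x y z; rewrite scale1r mul1r. Qed.
Lemma ipZl a x z : IP (a *: x) z = a * IP x z.
Proof. by have := ip_linear_l IP a x 0 z; rewrite addr0 ip0l addr0. Qed.
Lemma ipNl x z : IP (- x) z = - IP x z.
Proof. by rewrite -scaleN1r ipZl mulN1r. Qed.
Lemma ipBl x y z : IP (x - y) z = IP x z - IP y z.
Proof. by rewrite ipDl ipNl. Qed.
Lemma ip0r z : IP z 0 = 0.
Proof. by rewrite ip_sym ip0l. Qed.
Lemma ipDr x y z : IP z (x + y) = IP z x + IP z y.
Proof. by rewrite !(ip_sym IP z) ipDl. Qed.
Lemma ipZr a x z : IP z (a *: x) = a * IP z x.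
Proof. by rewrite !(ip_sym IP z) ipZl. Qed.
Lemma ipNr x z : IP z (- x) = - IP z x.
Proof. by rewrite !(ip_sym IP z) ipNl. Qed.
Lemma ipBr x y z : IP z (x - y) = IP z x - IP z y.
Proof. by rewrite !(ip_sym IP z) ipBl. Qed.

Lemma normD2 x y : `|x + y| ^+ 2 = `|x| ^+ 2 + 2 * IP x y + `|y| ^+ 2.
Proof.
rewrite -!(ip_norm IP) ipDl !ipDr (ip_sym IP y x); ring.
Qed.

Lemma CS x y : `|IP x y| <= `|x| * `|y|.
Proof.
have [->|y0] := eqVneq y 0; first by rewrite ip0r normr0 normr0 mulr0.
set a := IP x y; set b := `|y| ^+ 2.
have bgt0 : 0 < b by rewrite exprn_gt0 // normr_gt0.
have H : 0 <= `|b *: x - a *: y| ^+ 2 by apply: exprn_ge0.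
rewrite -(ip_norm IP) !(ipBl, ipBr, ipZl, ipZr) !(ip_norm IP) (ip_sym IP y x) -/a -/b in H.
have H2 : a ^+ 2 <= (`|x| * `|y|) ^+ 2.
  rewrite exprMn -/b.
  have : 0 <= b * (b * `|x| ^+ 2 - a ^+ 2) by nra.
  by rewrite pmulr_rge0 // subr_ge0 mulrC.
have n0 : 0 <= `|x| * `|y| by rewrite mulr_ge0.
have na : `|a| ^+ 2 = a ^+ 2 by rewrite real_normK ?num_real.
nra.
Qed.

Lemma normB2 x y : `|x - y| ^+ 2 = `|x| ^+ 2 - 2 * IP x y + `|y| ^+ 2.
Proof. by rewrite normD2 normrN ipNr; ring. Qed.
End Hil.

Lemma nearN (P : nat -> Prop) : (exists N, forall n, (N <= n)%N -> P n) <-> \forall n \near \oo, P n.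
Proof.
split; first by move=> [N HN]; exists N.
by move=> [N _ HN]; exists N.
Qed.

Definition seqcv (R : realType) (V : normedModType R) (u : nat -> V) (l : V) :=
  forall e, 0 < e -> exists N, forall n, (N <= n)%N -> `|l - u n| < e.

Lemma seqcvP (R : realType) (V : normedModType R) (u : nat -> V) (l : V) :
  u @ \oo --> l <-> seqcv u l.
Proof.
rewrite cvgrPdist_lt; split => H e e0; first exact/nearN/H.
exact/nearN/H.
Qed.

Lemma natinv_small (R : realType) (e : R) : 0 < e -> exists N, forall n, (N <= n)%N -> n.+1%:R^-1 < e.
Proof. move=> e0; exact/nearN/(near_infty_natSinv_lt (PosNum e0)). Qed.

Lemma cauchy_seq_cvg (R : realType) (V : completeNormedModType R) (u : nat -> V) :
  (forall e, 0 < e -> exists N, forall m n, (N <= m)%N -> (N <= n)%N -> `|u m - u n| < e) ->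
  exists l : V, u @ \oo --> l.
Proof.
move=> H.
have : cvg (u @ \oo).
  apply/cauchy_cvgP/cauchy_ballP => e e0.
  have [N HN] := H e e0.
  exists ([set u n | n in [set n | (N <= n)%N]], [set u n | n in [set n | (N <= n)%N]]).
    by split; exists N => // n /= Nn; exists n.
  move=> [a b] /= [[m Nm <-] [n Nn <-]].
  rewrite -ball_normE /=; exact: HN.
by move=> /cvg_ex [l Hl]; exists l.
Qed.

Section Proj.
Context (R : realType) (V : completeNormedModType R) (IP : inner_product V).

Definition subspace (M : set V) := M 0 /\ forall a x y, M x -> M y -> M (a *: x + y).
Definition seq_closed (M : set V) :=
  forall (u : nat -> V) l, (forall n, M (u n)) -> u @ \oo --> l -> M l.

Lemma projection (M : set V) : subspace M -> seq_closed M ->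
  forall h, exists2 p, M p & forall m, M m -> IP (h - p) m = 0.
Proof.
move=> [M0 Mlin] Mcl h.
pose S := [set `|h - m| ^+ 2 | m in M].
have Slb : has_lbound S by exists 0 => _ [m _ <-]; exact: exprn_ge0.
have hinf : has_inf S by split => //; exists (`|h - 0| ^+ 2); exists 0.
set d2 := inf S.
have d2le : forall m, M m -> d2 <= `|h - m| ^+ 2.
  by move=> m Mm; apply: ge_inf => //; exists m.
have : forall n : nat, exists m, M m /\ `|h - m| ^+ 2 < d2 + n.+1%:R^-1.
  move=> n; have [_ [m Mm <-] lt] := @inf_adherent _ S (n.+1%:R^-1) ltac:(by rewrite invr_gt0 ltr0Sn) hinf.
  by exists m.
move=> /choice [mm Hmm].
have Mhalf : forall x y, M x -> M y -> M (2^-1 *: x + 2^-1 *: y).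
  move=> x y Mx My; apply: (Mlin) => //.
  by rewrite -[_ *: y]addr0; apply: (Mlin).
have par : forall i j, `|mm i - mm j| ^+ 2 <= 2 * i.+1%:R^-1 + 2 * j.+1%:R^-1.
  move=> i j; have [Mi Hi] := Hmm i; have [Mj Hj] := Hmm j.
  have := d2le _ (Mhalf _ _ Mi Mj).
  rewrite !(normB2 IP) in Hi Hj *.
  rewrite -!(ip_norm IP) !(ipDl, ipDr, ipZl, ipZr) in Hi Hj *.
  have := ip_sym IP (mm j) (mm i); move=> Hs H.
  move: Hi Hj H Hs; set a := i.+1%:R^-1; set b := j.+1%:R^-1; move=> Hi Hj H Hs.
  lra.
have cau : forall e, 0 < e -> exists N, forall m n, (N <= m)%N -> (N <= n)%N -> `|mm m - mm n| < e.
  move=> e e0; have [N HN] := @natinv_small _ (e ^+ 2 / 8 : R) ltac:(by rewrite divr_gt0 // exprn_gt0).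
  exists N => m n Nm Nn; have := par m n; have := HN _ Nm; have := HN _ Nn.
  have := normr_ge0 (mm m - mm n).
  set a := m.+1%:R^-1; set b := n.+1%:R^-1; set x := `|mm m - mm n|; nra.
have [p pl] := cauchy_seq_cvg cau.
have Mp : M p by apply: (Mcl mm) => // n; case: (Hmm n).
exists p => // m Mm.
have mini : forall z, M z -> `|h - p| <= `|h - z|.
  move=> z Mz; rewrite leNgt; apply/negP => hlt.
  set D := `|h - p|; set c := `|h - z|.
  have c0 : 0 <= c := normr_ge0 _.
  have [N1 HN1] := (iffLR (seqcvP _ _) pl) ((D - c) / 2) ltac:(by rewrite divr_gt0 // subr_gt0).
  have [N2 HN2] := @natinv_small _ (((D - c) / 2) ^+ 2) ltac:(by rewrite exprn_gt0 // divr_gt0 // subr_gt0).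
  pose n := maxn N1 N2.
  have h1 := HN1 n (leq_maxl _ _); have h2 := HN2 n (leq_maxr _ _).
  have [_ h3] := Hmm n; have h4 := d2le _ Mz.
  have tri : D <= `|h - mm n| + `|p - mm n|.
    rewrite /D; have -> : h - p = (h - mm n) - (p - mm n) by rewrite opprB addrA subrK.
    exact: ler_normB.
  have := normr_ge0 (h - mm n); have := normr_ge0 (p - mm n).
  rewrite -/c -/D in h4 hlt *.
  set u := `|h - mm n| in h3 tri *; set v := `|p - mm n| in h1 tri *; set w := n.+1%:R^-1 in h2 h3 *.
  move=> v0 u0.
  have k : (D + c) / 2 <= u by lra.
  have k2 : ((D + c) / 2) ^+ 2 <= u ^+ 2 by nra.
  nra.
set g := IP (h - p) m; set b := `|m| ^+ 2.
have key : forall t, 0 <= - 2 * t * g + t ^+ 2 * b.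
  move=> t; have := mini _ (Mlin t m p Mm Mp).
  have -> : h - (t *: m + p) = (h - p) - t *: m by rewrite opprD addrA addrAC.
  move=> le; have le2 : `|h - p| ^+ 2 <= `|(h - p) - t *: m| ^+ 2.
    by have := normr_ge0 (h - p); nra.
  rewrite (normB2 IP (h - p) (t *: m)) normrZ exprMn (real_normK (num_real t)) ipZr -/g -/b in le2.
  lra.
have b0 : 0 <= b by rewrite exprn_ge0.
set s := (b + 1)^-1.
have s0 : 0 < s by rewrite invr_gt0; lra.
have sb : s * b < 1.
  have : s * (b + 1) = 1 by rewrite mulVf //; lra.
  lra.
have := key (g * s).
move=> k; have k2 : g ^+ 2 * s <= 0 by nra.
have : g ^+ 2 <= 0 by nra.
move=> gl; apply/eqP; rewrite -(sqrf_eq0 g) eq_le gl sqr_ge0.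
by [].
Qed.
End Proj.

Section Riesz.
Context (R : realType) (V : completeNormedModType R) (IP : inner_product V).

Definition lin_fun (f : V -> R) := forall a x y, f (a *: x + y) = a * f x + f y.

Lemma lin0 f : lin_fun f -> f 0 = 0.
Proof. move=> fl; have := fl 1 0 0; rewrite scale1r addr0 mul1r => h; lra. Qed.
Lemma linB f : lin_fun f -> forall x y, f (x - y) = f x - f y.
Proof. move=> fl x y; have := fl (-1) y x; rewrite scaleN1r addrC => ->; lra. Qed.
Lemma linZ f : lin_fun f -> forall a x, f (a *: x) = a * f x.
Proof. move=> fl a x; have := fl a x 0; by rewrite addr0 lin0 // addr0. Qed.

Lemma riesz (f : V -> R) : lin_fun f -> (exists C, forall x, `|f x| <= C * `|x|) ->
  exists g, forall x, f x = IP x g.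
Proof.
move=> fl [C HC].
have [f0|] := pselect (forall x, f x = 0).
  by exists 0 => x; rewrite ip0r f0.
move=> /existsNP [h fh].
pose K := [set x | f x = 0].
have Ksub : subspace K.
  split; first exact: lin0.
  by move=> a x y; rewrite /K /= fl => -> ->; rewrite mulr0 addr0.
have Kcl : seq_closed K.
  move=> u l Ku /seqcvP ul; rewrite /K /=.
  apply/eqP; rewrite -normr_le0; apply/ler_addgt0Pr => e e0; rewrite add0r.
  have [N HN] := ul (e / (`|C| + 1)) ltac:(by rewrite divr_gt0 // ltr_pwDr).
  have := HN N (leqnn N); have := HC (l - u N); rewrite linB // Ku subr0.
  have := normr_ge0 (l - u N); have := ler_norm C.
  set a := `|l - u N| => a0 Cn h1 h2.
  have c0 := normr_ge0 C.
  have h3 : (`|C| + 1) * (e / (`|C| + 1)) = e by rewrite mulrC divfK //; lra.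
  move: h1 h2 h3 Cn c0; set E := e / _; set c := `|C|; set b := `|f l| => h1 h2 h3 Cn c0.
  have s1 : C * a <= c * a by apply: ler_wpM2r.
  have s2 : c * a <= c * E by apply: ler_wpM2l => //; apply: ltW.
  have E0 : 0 <= E by have := normr_ge0 (l - u N); lra.
  nra.
have [p Kp orth] := projection IP Ksub Kcl h.
set q := h - p.
have fq : f q = f h by rewrite /q linB // Kp subr0.
have q0 : IP q q != 0.
  rewrite (ip_norm IP) sqrf_eq0 normr_eq0; apply/eqP => q0.
  by apply: fh; rewrite -fq q0 lin0.
exists ((f q / IP q q) *: q) => x.
have Kk : K (x - (f x / f q) *: q).
  by rewrite /K /= linB // linZ // divfK //; [rewrite subrr | rewrite fq; apply/eqP].
rewrite ipZr.
have := orth _ Kk; rewrite ip_sym ipBl ipZl => /eqP; rewrite subr_eq0 => /eqP ->.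
have fq0 : f q != 0 by rewrite fq; apply/eqP.
move: q0 fq0; rewrite -/q; move: (IP q q) (f q) => a b a0 b0.
by field; rewrite a0 b0.
Qed.
End Riesz.

Section Diag.
Context (R : realType).

Definition strict (f : nat -> nat) := forall m n, (m < n)%N -> (f m < f n)%N.

Lemma strict_ge f : strict f -> forall n, (n <= f n)%N.
Proof.
move=> sf; elim=> [|n IH] //; apply: leq_ltn_trans IH _; exact: sf.
Qed.

Lemma strict_le f : strict f -> forall m n, (m <= n)%N -> (f m <= f n)%N.
Proof.
move=> sf m n; rewrite leq_eqVlt => /orP [/eqP ->//|mn]; exact/ltnW/sf.
Qed.

Lemma strict_comp f g : strict f -> strict g -> strict (f \o g).
Proof. by move=> sf sg m n mn; apply/sf/sg. Qed.

Lemma bw_step (a : nat -> R) (B : R) : (forall n, `|a n| <= B) ->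
  exists g, strict g /\ exists L : R, seqcv (a \o g) L.
Proof.
move=> aB.
have bf : bounded_fun a.
  exists B; split; first exact: num_real.
  by move=> M BM x _ /=; apply: le_trans (aB x) (ltW BM).
have [g gi gc] := bolzano_weierstrass bf.
exists g; split.
  by move=> m n mn; change ((g m < g n)%O); rewrite (leW_mono gi).
by move/cvg_ex: gc => [L HL]; exists L; apply/seqcvP.
Qed.

Fixpoint diagPhi (G : nat * (nat -> nat) -> nat -> nat) (j : nat) : nat -> nat :=
  match j with
  | 0 => id
  | j'.+1 => diagPhi G j' \o G (j', diagPhi G j')
  end.

Lemma diag (a : nat -> nat -> R) : (forall j, exists B, forall n, `|a j n| <= B) ->
  exists phi, strict phi /\ forall j, exists L : R, seqcv (fun k => a j (phi k)) L.
Proof.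
move=> aB.
have step : forall p : nat * (nat -> nat), exists g, strict g /\
    exists L : R, seqcv (a p.1 \o (p.2 \o g)) L.
  move=> [j f]; have [B HB] := aB j.
  have [g [sg HL]] := @bw_step (a j \o f) B (fun n => HB (f n)).
  by exists g; split.
have [G HG] := choice step.
pose Phi := diagPhi G.
have sPhi : forall j, strict (Phi j).
  elim=> [|j IH] /=; first by [].
  by apply: strict_comp => //; case: (HG (j, Phi j)).
have rng : forall j k, (j <= k)%N -> forall n, exists i, Phi k n = Phi j i.
  move=> j k; elim: k => [|k IH] jk n.
    by move: jk; rewrite leqn0 => /eqP ->; exists n.
  move: jk; rewrite leq_eqVlt => /orP [/eqP ->|]; first by exists n.
  rewrite ltnS => jk; have [i Hi] := IH jk (G (k, Phi k) n).
  by exists i; rewrite -Hi.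
pose d k := Phi k.+1 k.
have sd : strict d.
  suff hk : forall k, (d k < d k.+1)%N by exact: (homo_ltn ltn_trans hk).
  move=> k; rewrite /d /=.
  case: (HG (k.+1, Phi k.+1)) => sg _ /=.
  apply: leq_trans (strict_le (sPhi k.+1) (strict_ge sg k.+1)).
  by apply: sPhi.
exists d; split => // j.
case: (HG (j, Phi j)) => _ [L HL].
exists L => e e0; have [N HN] := HL e e0.
exists (maxn j (Phi j.+1 N)) => k; rewrite geq_max => /andP [jk Nk].
have [i Hi] := rng j.+1 k.+1 jk k.
have iN : (N <= i)%N.
  rewrite leqNgt; apply/negP => iN.
  have := sPhi j.+1 _ _ iN; rewrite -Hi => h.
  have := strict_ge sd k; rewrite /d => h2.
  lia.
by have := HN i iN; rewrite /d Hi.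
Qed.
End Diag.

Section RealSeq.
Context (R : realType).
Implicit Types (u v : nat -> R).

Lemma seqcv_unique u (L1 L2 : R) : seqcv u L1 -> seqcv u L2 -> L1 = L2.
Proof.
move=> /seqcvP h1 /seqcvP h2; exact: (cvg_unique _ h1 h2).
Qed.

Lemma seqcv_lin u v (a L1 L2 : R) : seqcv u L1 -> seqcv v L2 ->
  seqcv (fun n => a * u n + v n) (a * L1 + L2).
Proof.
move=> /seqcvP h1 /seqcvP h2; apply/seqcvP.
exact: (cvgD (cvgM (cvg_cst a) h1) h2).
Qed.

Lemma seqcv_bound u (L B : R) : (forall n, `|u n| <= B) -> seqcv u L -> `|L| <= B.
Proof.
move=> uB uL; apply/ler_addgt0Pr => e e0.
have [N HN] := uL e e0; have := HN N (leqnn N); have := uB N.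
have : `|L| <= `|L - u N| + `|u N|.
  by rewrite -{1}[L](subrK (u N)); apply: ler_normD.
lra.
Qed.

Lemma seqcv_cauchy u : (forall e, 0 < e -> exists N, forall m n, (N <= m)%N -> (N <= n)%N -> `|u m - u n| < e) ->
  exists L : R, seqcv u L.
Proof.
by move=> H; have [L HL] := cauchy_seq_cvg H; exists L; apply/seqcvP.
Qed.
End RealSeq.

Section WeakCompact.
Context (R : realType) (V : completeNormedModType R) (IP : inner_product V).

Lemma weak_compact (u : nat -> V) (B : R) : (forall n, `|u n| <= B) ->
  exists phi, strict phi /\ exists x, weak_cvg IP (u \o phi) x.
Proof.
move=> uB.
have B0 : 0 <= B by apply: le_trans (uB 0%N); exact: normr_ge0.
have ipB : forall n h, `|IP (u n) h| <= B * `|h|.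
  move=> n h; apply: le_trans (CS IP _ _) _; apply: ler_wpM2r => //.
have [phi [sphi Hphi]] : exists phi, strict phi /\ forall j, exists L : R, seqcv (fun k => IP (u (phi k)) (u j)) L.
  by apply: (@diag R (fun j n => IP (u n) (u j))) => j; exists (B * `|u j|) => n; apply: ipB.
pose M := [set h | exists L : R, seqcv (fun k => IP (u (phi k)) h) L].
have Msub : subspace M.
  split.
    by exists 0 => e e0; exists 0%N => n _; rewrite ip0r subrr normr0.
  move=> a x y [L1 H1] [L2 H2]; exists (a * L1 + L2).
  have := seqcv_lin a H1 H2.
  by have -> : (fun k => IP (u (phi k)) (a *: x + y)) = (fun k => a * IP (u (phi k)) x + IP (u (phi k)) y)
    by apply/funext => k; rewrite ipDr ipZr.
have Mcl : seq_closed M.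
  move=> w l Mw /seqcvP wl; rewrite /M /=.
  apply: seqcv_cauchy => e e0.
  have d0 : 0 < e / (4 * (B + 1)) by rewrite divr_gt0 // mulr_gt0 //; lra.
  have [n Hn] := wl _ d0; have {}Hn := Hn n (leqnn n).
  have [L HL] := Mw n.
  have [N HN] := HL (e / 4) ltac:(by rewrite divr_gt0).
  exists N => k m Nk Nm.
  have e1 := HN k Nk; have e2 := HN m Nm.
  have f1 := ipB (phi k) (l - w n); have f2 := ipB (phi m) (l - w n).
  rewrite ipBr in f1; rewrite ipBr in f2.
  have hB : B * `|l - w n| <= e / 4.
    have : B * `|l - w n| <= (B + 1) * (e / (4 * (B + 1))).
      apply: ler_pM; [exact: B0|exact: normr_ge0|lra|exact: ltW].
    suff -> : (B + 1) * (e / (4 * (B + 1))) = e / 4 by [].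
    by field; lra.
  move: e1 e2 f1 f2 hB.
  set a1 := IP (u (phi k)) l; set a2 := IP (u (phi m)) l.
  set b1 := IP (u (phi k)) (w n); set b2 := IP (u (phi m)) (w n).
  set c := B * _ => e1 e2 f1 f2 hB.
  have t1 : `|a1 - a2| <= `|a1 - b1| + `|b1 - L| + `|L - b2| + `|b2 - a2|.
    have -> : a1 - a2 = (a1 - b1) + (b1 - L) + (L - b2) + (b2 - a2) by ring.
    by apply: le_trans (ler_normD _ _) _; rewrite lerD2r; apply: le_trans (ler_normD _ _) _;
       rewrite lerD2r; apply: ler_normD.
  have : `|b1 - L| = `|L - b1| by rewrite distrC.
  have : `|b2 - a2| = `|a2 - b2| by rewrite distrC.
  lra.
have Mall : forall h, M h.
  move=> h; have [p Mp orth] := projection IP Msub Mcl h.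
  have [L HL] := Mp; exists L.
  suff -> : (fun k => IP (u (phi k)) h) = (fun k => IP (u (phi k)) p) by [].
  apply/funext => k.
  have := orth (u (phi k)) (Hphi (phi k)).
  by rewrite ipBl => /eqP; rewrite subr_eq0 => /eqP; rewrite !(ip_sym IP _ (u (phi k))).
have [F HF] := choice Mall.
have Flin : lin_fun F.
  move=> a x y; apply: (seqcv_unique (HF (a *: x + y))).
  have := seqcv_lin a (HF x) (HF y).
  by have -> : (fun k => IP (u (phi k)) (a *: x + y)) = (fun k => a * IP (u (phi k)) x + IP (u (phi k)) y)
    by apply/funext => k; rewrite ipDr ipZr.
have Fb : exists C, forall x, `|F x| <= C * `|x|.
  by exists B => x; apply: (seqcv_bound _ (HF x)) => n; apply: ipB.
have [g Hg] := riesz IP Flin Fb.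
exists phi; split => //; exists g => h; apply/seqcvP.
by rewrite ip_sym -Hg; apply: HF.
Qed.
End WeakCompact.

Section Helpers.
Context (R : realType).

Lemma ip_ext (V : normedModType R) (IP : inner_product V) (a b : V) :
  (forall h, IP a h = IP b h) -> a = b.
Proof.
move=> H; have := H (a - b); rewrite -[IP b _]ip_sym -[IP a (a - b)]ip_sym => /eqP.
by rewrite -subr_eq0 -ipBr (ip_norm IP) sqrf_eq0 normr_eq0 subr_eq0 => /eqP.
Qed.

Lemma weak_cvgB (V : normedModType R) (IP : inner_product V) u v x z :
  weak_cvg IP u x -> weak_cvg IP v z -> weak_cvg IP (fun n => u n - v n) (x - z).
Proof.
move=> hu hv h; rewrite ipBl.
have -> : (fun n => IP (u n - v n) h) = (fun n => IP (u n) h - IP (v n) h).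
  by apply/funext => n; rewrite ipBl.
exact: cvgB.
Qed.

Lemma weak_lsc_norm (V : normedModType R) (IP : inner_product V) v w (t : R) :
  weak_cvg IP v w -> t < `|w| ^+ 2 -> exists N, forall n, (N <= n)%N -> t < `|v n| ^+ 2.
Proof.
move=> /(_ w) /seqcvP hv tw.
have [N HN] := hv ((`|w| ^+ 2 - t) / 2) ltac:(by rewrite divr_gt0 // subr_gt0).
exists N => n Nn; have h1 := HN n Nn.
have h2 := ler_norm (IP w w - IP (v n) w).
have h3 := exprn_ge0 2 (normr_ge0 (v n - w)); rewrite (normB2 IP) in h3.
rewrite (ip_norm IP) in h1 h2; lra.
Qed.

Lemma fin_of_le (lam a c : R) (q : \bar R) : 0 < lam -> (0 <= q)%E ->
  (a%:E + lam%:E * q <= c%:E)%E -> exists r, q = r%:E /\ 0 <= r /\ a + lam * r <= c.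
Proof.
move=> l0; case: q => [r| |] q0 //.
  by rewrite -EFinM -EFinD lee_fin => h; exists r; split; rewrite -?lee_fin.
by rewrite muleC gt0_mulye ?lte_fin // addey.
Qed.

Lemma liminf_lt (u : nat -> \bar R) (L : \bar R) (t : R) :
  (L <= limn_einf u)%E -> (t%:E < L)%E -> exists N, forall n, (N <= n)%N -> (t%:E < u n)%E.
Proof.
move=> Lu tL.
have : (t%:E < limn_einf u)%E by apply: lt_le_trans Lu.
rewrite limn_einf_lim (cvg_lim (@ereal_hausdorff R) (@cvg_einfs_sup R u)).
move=> /ereal_sup_gt [_ [N _ <-] tN]; exists N => n Nn.
apply: lt_le_trans tN _; apply: ereal_inf_lbound; exists n => //.
Qed.

Lemma subseq_principle (s : nat -> R) (L : R) :
  (forall phi, strict phi -> exists psi, strict psi /\ seqcv (fun k => s (phi (psi k))) L) ->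
  seqcv s L.
Proof.
move=> H e e0; apply: contrapT => /forallNP HN.
have bad : forall N, exists n, (N <= n)%N /\ e <= `|L - s n|.
  move=> N; have [n] := (existsNP _).2 (HN N); move=> /not_implyP [Nn hn].
  by exists n; split => //; rewrite leNgt; apply/negP.
have [f Hf] := choice bad.
pose phi := fix phi k := match k with 0 => f 0%N | k'.+1 => f (phi k').+1 end.
have sphi : strict phi.
  suff hk : forall k, (phi k < phi k.+1)%N by exact: (homo_ltn ltn_trans hk).
  by move=> k /=; case: (Hf (phi k).+1).
have [psi [_ Hpsi]] := H phi sphi.
have [N HN'] := Hpsi e e0; have := HN' N (leqnn N).
have : e <= `|L - s (phi (psi N))|.
  by case: (psi N) => [|k] /=; [case: (Hf 0%N)|case: (Hf (phi k).+1)].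
lra.
Qed.

Lemma seqcv_ub (c : nat -> R) (L : R) : seqcv c L -> exists Cb, forall n, c n <= Cb.
Proof.
move=> /(_ 1 ltr01) [N HN].
have fin : forall N, exists Cb, forall n, (n < N)%N -> c n <= Cb.
  elim=> [|M [Cb HCb]]; first by exists 0.
  exists (`|Cb| + `|c M|) => n; rewrite ltnS leq_eqVlt => /orP [/eqP ->|nM].
    by have := normr_ge0 Cb; have := ler_norm (c M); lra.
  by have := HCb n nM; have := ler_norm Cb; have := normr_ge0 (c M); lra.
have [Cb HCb] := fin N.
exists (`|Cb| + `|L| + 1) => n; case: (ltnP n N) => nN.
  by have := HCb n nN; have := ler_norm Cb; have := normr_ge0 L; lra.
have := HN n nN; have := ler_norm L; have := normr_ge0 Cb.
have : c n - L <= `|L - c n| by rewrite distrC ler_norm.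
lra.
Qed.
End Helpers.

Section Main.
Context (R : realType) (X : completeNormedModType R) (IPX : inner_product X).

Lemma A_weak (Y : normedModType R) (IPY : inner_product Y) (A : X -> Y) :
  bounded_linear A -> forall u x, weak_cvg IPX u x -> weak_cvg IPY (A \o u) (A x).
Proof.
move=> [Al [C HC]] u x hu h.
have Flin : lin_fun (fun z => IPY (A z) h).
  by move=> a z1 z2 /=; rewrite Al ipDl ipZl.
have Fb : exists C', forall z, `|IPY (A z) h| <= C' * `|z|.
  exists (C * `|h|) => z; apply: le_trans (CS IPY _ _) _.
  rewrite mulrAC; apply: ler_wpM2r => //.
have [g Hg] := riesz IPX Flin Fb.
rewrite /= Hg.
have -> : (fun n => IPY ((A \o u) n) h) = (fun n => IPX (u n) g) by apply/funext => n /=; rewrite Hg.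
exact: hu.
Qed.

Lemma key_lsc (lambda : R) (Q : X -> \bar R) (Phi : X -> X) :
  0 < lambda -> (forall x, (0 <= Q x)%E) -> weakly_lsc IPX Q ->
  forall (u v : nat -> X) (w : X) (c : nat -> R) (C : R),
  weak_cvg IPX u w -> weak_cvg IPX v (Phi w - w) ->
  (forall k, ((2^-1 * `|v k| ^+ 2)%:E + lambda%:E * Q (u k) <= (c k)%:E)%E) ->
  (forall e, 0 < e -> exists N, forall k, (N <= k)%N -> c k <= C + e) ->
  exists r, regul Phi lambda Q w = r%:E /\ r <= C /\
   forall e, 0 < e -> exists N, forall k, (N <= k)%N ->
     r - e < 2^-1 * `|v k| ^+ 2 + lambda * fine (Q (u k)).
Proof.
move=> l0 Q0 Qlsc u v w c C hu hv hc hC.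
have fq : forall k, exists r, Q (u k) = r%:E /\ 0 <= r /\ 2^-1 * `|v k| ^+ 2 + lambda * r <= c k.
  by move=> k; apply: fin_of_le => //.
have Ql := Qlsc u w hu.
have [q Qw] : exists q, Q w = q%:E.
  case Ew: (Q w) => [q| |]; first by exists q.
    have [N1 HN1] := liminf_lt (t := (C + 1) / lambda) Ql ltac:(by rewrite Ew ltry).
    have [N2 HN2] := hC (2^-1) ltac:(by []).
    pose k := maxn N1 N2.
    have := HN1 k (leq_maxl _ _); have := HN2 k (leq_maxr _ _).
    have [qk [Qk [qk0 hk]]] := fq k; rewrite /= Qk lte_fin => h2 h1.
    have : lambda * ((C + 1) / lambda) = C + 1 by rewrite mulrC divfK //; lra.
    have := exprn_ge0 2 (normr_ge0 (v k)); nra.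
  by have := Q0 w; rewrite Ew.
set r := 2^-1 * `|Phi w - w| ^+ 2 + lambda * q.
have est : forall e, 0 < e -> exists N, forall k, (N <= k)%N ->
     r - e < 2^-1 * `|v k| ^+ 2 + lambda * fine (Q (u k)).
  move=> e e0.
  have [N1 HN1] := weak_lsc_norm (t := `|Phi w - w| ^+ 2 - e) hv ltac:(lra).
  have [N2 HN2] := liminf_lt (t := q - e / (2 * lambda)) Ql
    ltac:(by rewrite Qw lte_fin ltrBlDr ltrDl divr_gt0 // mulr_gt0).
  exists (maxn N1 N2) => k; rewrite geq_max => /andP [k1 k2].
  have := HN1 k k1; have := HN2 k k2.
  have [qk [Qk _]] := fq k; rewrite /= Qk lte_fin /=.
  have : lambda * (e / (2 * lambda)) = e / 2 by field; lra.
  rewrite /r; nra.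
exists r; split; first by rewrite /regul Qw -EFinM -EFinD.
split => //.
apply/ler_addgt0Pr => e e0.
have [N1 HN1] := est (e / 2) ltac:(by rewrite divr_gt0).
have [N2 HN2] := hC (e / 2) ltac:(by rewrite divr_gt0).
pose k := maxn N1 N2.
have := HN1 k (leq_maxl _ _); have := HN2 k (leq_maxr _ _).
have [qk [Qk [_ hk]]] := fq k; rewrite Qk /=.
lra.
Qed.
End Main.


Lemma right_seq (R : realType) (X : normedModType R) (f : R -> X) (l : X) (d : nat -> R) :
  f @ 0^'+ --> l -> (forall n, 0 < d n) -> d @ \oo --> 0 -> seqcv (fun n => f (d n)) l.
Proof.
move=> /cvgrPdist_lt fl d0 /seqcvP dl e e0.
have := fl e e0; move=> [del /= del0 Hdel].
have [N HN] := dl del del0.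
exists N => n Nn; apply: Hdel; last exact: d0.
by rewrite /ball /= ; have := HN n Nn.
Qed.

Lemma weak_cvg_const (R : realType) (V : normedModType R) (IP : inner_product V) u (x a : V) :
  weak_cvg IP u x -> (forall n, u n = a) -> x = a.
Proof.
move=> hu ua; apply: (@ip_ext _ _ IP) => h.
have := hu h; have -> : (fun n => IP (u n) h) = (fun=> IP a h) by apply/funext => n; rewrite ua.
move=> /seqcvP h1; apply: (seqcv_unique h1) => e e0; exists 0%N => n _.
by rewrite subrr normr0.
Qed.

Lemma fin_Q (R : realType) (T : Type) (Q : T -> \bar R) x :
  (0 <= Q x)%E -> (Q x < +oo)%E -> exists q, Q x = q%:E.
Proof. by case: (Q x) => [q| |] //; exists q. Qed.

Unset Implicit Arguments. Set Strict Implicit. Set Printing Implicit Defensive.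

Theorem theorem1 (R : realType)
  (X Y : completeNormedModType R) (IPX : inner_product X) (IPY : inner_product Y)
  (A : X -> Y) (hA : bounded_linear A)
  (lambda : R) (hlambda : 0 < lambda)
  (Phi : X -> X) (Phid : R -> X -> X) (Q : X -> \bar R)
  (y : Y)
  (A1a : weakly_seq_continuous IPX Phi)
  (A1b : forall d : R, 0 < d -> weakly_seq_continuous IPX (Phid d))
  (A2 : weakly_unif_cvg_bounded IPX Phid Phi)
  (A3 : forall x : X, min_solution A y (regul Phi lambda Q) x ->
          (fun d : R => Phid d x) @ 0^'+ --> Phi x)
  (A4 : Q_proper Q /\ Q_coercive Q /\ weakly_lsc IPX Q)
  (hsolv : exists x0 : X, A x0 = y /\ (Q x0 < +oo)%E)
  (delta : nat -> R) (hdelta_pos : forall n, 0 < delta n)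
  (hdelta_cvg : delta @ \oo --> 0)
  (ys : nat -> Y) (hys : forall n, `|y - ys n| <= delta n)
  (xs : nat -> X)
  (hxs_feas : forall n, `|A (xs n) - ys n| <= delta n)
  (hxs_min : forall n z, `|A z - ys n| <= delta n ->
      (regul (Phid (delta n)) lambda Q (xs n) <= regul (Phid (delta n)) lambda Q z)%E) :
  (exists xp : X, weak_acc_point IPX xs xp)
  /\ (forall (phi : nat -> nat) (xp : X),
        {homo phi : m n / (m < n)%N >-> (m < n)%N} ->
        weak_cvg IPX (xs \o phi) xp ->
        min_solution A y (regul Phi lambda Q) xp /\
        (fun k => regul (Phid (delta (phi k))) lambda Q (xs (phi k))) @ \oo
          --> regul Phi lambda Q xp)
  /\ (forall xp : X, min_solution A y (regul Phi lambda Q) xp ->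
        (forall z, min_solution A y (regul Phi lambda Q) z -> z = xp) ->
        weak_cvg IPX xs xp /\
        (fun n => regul (Phid (delta n)) lambda Q (xs n)) @ \oo
          --> regul Phi lambda Q xp).
Proof.
have Aw := @A_weak _ _ IPX _ IPY _ hA.
case: A4 => [[Q0 _] [Qcoer Qlsc]].
set Rg := regul Phi lambda Q.
have Rg0 : forall z, (0 <= Rg z)%E.
  by move=> z; rewrite /Rg /regul adde_ge0 ?lee_fin ?mulr_ge0 ?exprn_ge0 // mule_ge0 // lee_fin ltW.
have [x0 [Ax0 Qx0]] := hsolv.
have [q0 Qq0] := fin_Q (Q0 x0) Qx0.
have [xm [Axm xmmin]] : exists xm, min_solution A y Rg xm.
  pose S := [set r : R | exists z, A z = y /\ Rg z = r%:E].
  have Sx0 : S (2^-1 * `|Phi x0 - x0| ^+ 2 + lambda * q0).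
    by exists x0; split => //; rewrite /Rg /regul Qq0 -EFinM -EFinD.
  have Slb : has_lbound S.
    by exists 0 => r [z [_ Hz]]; have := Rg0 z; rewrite Hz lee_fin.
  have hinf : has_inf S by split => //; exists (2^-1 * `|Phi x0 - x0| ^+ 2 + lambda * q0).
  set m := inf S.
  have : forall k : nat, exists zr : X * R, A zr.1 = y /\ Rg zr.1 = zr.2%:E /\ zr.2 < m + k.+1%:R^-1.
    move=> k; have [rr [z [Az Hz]] lt] := @inf_adherent _ S (k.+1%:R^-1) ltac:(by rewrite invr_gt0 ltr0Sn) hinf.
    by exists (z, rr).
  move=> /choice [zf Hzf].
  pose z k := (zf k).1; pose r k := (zf k).2.
  have Hz k : A (z k) = y /\ Rg (z k) = (r k)%:E /\ r k < m + k.+1%:R^-1 := Hzf k.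
  have rle k : r k < m + 1.
    have : k.+1%:R^-1 <= (1 : R) by rewrite invf_le1 ?ler1n ?ltr0Sn.
    by have [_ [_ H]] := Hz k; move: H; set t := k.+1%:R^-1 => H; lra.
  have fz k : exists q, Q (z k) = q%:E /\ 0 <= q /\ 2^-1 * `|Phi (z k) - z k| ^+ 2 + lambda * q <= r k.
    by apply: fin_of_le => //; have [_ [H _]] := Hz k; rewrite -H.
  have [rho Hrho] := Qcoer ((m + 1) / lambda + 1).
  have zb : forall k, `|z k| <= rho.
    move=> k; rewrite leNgt; apply/negP => H; have := Hrho _ H.
    have [q [Qq [qq0 hq]]] := fz k; rewrite Qq lee_fin => hM.
    have := rle k; have := exprn_ge0 2 (normr_ge0 (Phi (z k) - z k)).
    have : lambda * ((m + 1) / lambda) = m + 1 by rewrite mulrC divfK //; lra.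
    nra.
  have [psi [spsi [w hw]]] := weak_compact IPX zb.
  have Awy : A w = y.
    by apply: (weak_cvg_const (Aw _ _ hw)) => n /=; case: (Hz (psi n)).
  have hv := weak_cvgB (A1a _ _ hw) hw.
  have hc : forall k, ((2^-1 * `|Phi (z (psi k)) - z (psi k)| ^+ 2)%:E + lambda%:E * Q (z (psi k)) <= (r (psi k))%:E)%E.
    by move=> k; have [_ [H _]] := Hz (psi k); rewrite -H.
  have hC : forall e, 0 < e -> exists N, forall k, (N <= k)%N -> r (psi k) <= m + e.
    move=> e e0; have [N HN] := natinv_small e0; exists N => k Nk.
    have := HN _ (leq_trans Nk (strict_ge spsi k)).
    by have [_ [_ H]] := Hz (psi k); move: H; set t := (psi k).+1%:R^-1 => H; lra.
  have [r0 [Rw [r0m _]]] := key_lsc hlambda Q0 Qlsc hw hv hc hC.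
  exists w; split => // z' Az'.
  have -> : Rg w = r0%:E by exact: Rw.
  case Ez: (Rg z') => [s| |]; last by have := Rg0 z'; rewrite Ez.
    rewrite lee_fin; apply: le_trans r0m _; apply: ge_inf => //.
    by exists z'.
  exact: leey.
have Rx0 : Rg x0 = (2^-1 * `|Phi x0 - x0| ^+ 2 + lambda * q0)%:E by rewrite /Rg /regul Qq0 -EFinM -EFinD.
have [qm [Qxm _]] : exists q, Q xm = q%:E /\ 0 <= q /\ 2^-1 * `|Phi xm - xm| ^+ 2 + lambda * q <= 2^-1 * `|Phi x0 - x0| ^+ 2 + lambda * q0.
  by apply: fin_of_le => //; rewrite -Rx0; exact: xmmin.
set rm := 2^-1 * `|Phi xm - xm| ^+ 2 + lambda * qm.
have Rxm : Rg xm = rm%:E by rewrite /Rg /regul Qxm -EFinM -EFinD.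
pose c n := 2^-1 * `|Phid (delta n) xm - xm| ^+ 2 + lambda * qm.
have hPhim : seqcv (fun n => Phid (delta n) xm) (Phi xm).
  exact: (right_seq (A3 xm (conj Axm xmmin)) hdelta_pos hdelta_cvg).
have hc : seqcv c rm.
  apply/seqcvP; rewrite /c /rm.
  apply: cvgD; last exact: cvg_cst.
  apply: cvgM; first exact: cvg_cst.
  have -> : (fun n => `|Phid (delta n) xm - xm| ^+ 2) = (fun n => `|Phid (delta n) xm - xm| * `|Phid (delta n) xm - xm|).
    by apply/funext => n; rewrite expr2.
  rewrite expr2.
  by apply: cvgM; apply: cvg_norm; apply: cvgB; (exact: cvg_cst || exact/seqcvP).
have hle : forall n, (regul (Phid (delta n)) lambda Q (xs n) <= (c n)%:E)%E.
  move=> n; have := hxs_min n xm ltac:(by rewrite Axm).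
  by rewrite /regul Qxm -EFinM -EFinD.
have fx n := fin_of_le hlambda (Q0 (xs n)) (hle n).
pose s n := 2^-1 * `|Phid (delta n) (xs n) - xs n| ^+ 2 + lambda * fine (Q (xs n)).
have Rn_eq : forall n, regul (Phid (delta n)) lambda Q (xs n) = (s n)%:E.
  by move=> n; have [q [Qq _]] := fx n; rewrite /s /regul Qq /= -EFinM -EFinD.
have s_le : forall n, s n <= c n.
  by move=> n; have [q [Qq [_ H]]] := fx n; rewrite /s Qq.
have [Cb HCb] := seqcv_ub hc.
have [rho Hrho] := Qcoer (Cb / lambda + 1).
have xsb : forall n, `|xs n| <= rho.
  move=> n; rewrite leNgt; apply/negP => H; have := Hrho _ H.
  have [q [Qq [qq0 hq]]] := fx n; rewrite Qq lee_fin => hM.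
  have := HCb n; have := exprn_ge0 2 (normr_ge0 (Phid (delta n) (xs n) - xs n)).
  have : lambda * (Cb / lambda) = Cb by rewrite mulrC divfK //; lra.
  nra.
have dsmall : forall e, 0 < e -> exists N, forall n, (N <= n)%N -> delta n < e.
  move=> e e0; have [N HN] := (iffLR (seqcvP _ _) hdelta_cvg) e e0; exists N => n Nn.
  by have := HN n Nn; rewrite sub0r normrN gtr0_norm.
have cphi : forall phi, strict phi -> forall e, 0 < e -> exists N, forall k, (N <= k)%N -> c (phi k) < rm + e.
  move=> phi sphi e e0; have [N HN] := hc e e0; exists N => k Nk.
  have := HN _ (leq_trans Nk (strict_ge sphi k)).
  have := ler_norm (c (phi k) - rm); rewrite distrC; lra.
have core : forall phi xp, strict phi -> weak_cvg IPX (xs \o phi) xp ->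
   min_solution A y Rg xp /\ Rg xp = rm%:E /\ seqcv (fun k => s (phi k)) rm.
  move=> phi xp sphi hxp.
  have Axp : A xp = y.
    apply: (@ip_ext _ _ IPY) => h.
    have h1 := iffLR (seqcvP _ _) (Aw _ _ hxp h).
    apply: (seqcv_unique h1) => e e0.
    have h0 := normr_ge0 h.
    have dd0 : 0 < e / (2 * (`|h| + 1)) by rewrite divr_gt0 // mulr_gt0 //; lra.
    have [N HN] := dsmall _ dd0.
    exists N => k Nk /=.
    have dk := HN _ (leq_trans Nk (strict_ge sphi k)).
    rewrite -ipBl.
    apply: le_lt_trans (CS IPY _ _) _.
    have : `|y - A (xs (phi k))| <= 2 * delta (phi k).
      have -> : y - A (xs (phi k)) = (y - ys (phi k)) - (A (xs (phi k)) - ys (phi k)).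
        by rewrite opprB addrA subrK.
      apply: le_trans (ler_normB _ _) _; have := hys (phi k); have := hxs_feas (phi k); lra.
    have : (2 * (`|h| + 1)) * (e / (2 * (`|h| + 1))) = e by field; lra.
    have := normr_ge0 (y - A (xs (phi k))).
    move: dd0 dk; set dd := e / _; nra.
  have hPd : weak_cvg IPX (fun k => Phid (delta (phi k)) (xs (phi k))) (Phi xp).
    move=> h; apply/seqcvP => e e0.
    have e20 : 0 < e / 2 by rewrite divr_gt0.
    have [d0 [d00 Hd0]] := A2 [set x | `|x| <= rho] (ex_intro _ rho (fun x hx => hx)) h (e / 2) e20.
    have [N1 HN1] := dsmall d0 d00.
    have [N2 HN2] := iffLR (seqcvP _ _) (A1a _ _ hxp h) (e / 2) e20.
    exists (maxn N1 N2) => k; rewrite geq_max => /andP [k1 k2].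
    have := Hd0 (delta (phi k)) (hdelta_pos _) (HN1 _ (leq_trans k1 (strict_ge sphi k))) (xs (phi k)) (xsb _).
    have := HN2 k k2; rewrite /= ipBl.
    set a := IPX (Phi xp) h; set b := IPX (Phi (xs (phi k))) h; set d := IPX (Phid _ _) h.
    move=> h1 h2.
    have : `|a - d| <= `|a - b| + `|d - b|.
      have -> : a - d = (a - b) - (d - b) by rewrite opprB addrA subrK.
      exact: ler_normB.
    lra.
  have hv := weak_cvgB hPd hxp.
  have hc' : forall k, ((2^-1 * `|Phid (delta (phi k)) (xs (phi k)) - (xs \o phi) k| ^+ 2)%:E
      + lambda%:E * Q ((xs \o phi) k) <= (c (phi k))%:E)%E.
    by move=> k; exact: hle.
  have hC' : forall e, 0 < e -> exists N, forall k, (N <= k)%N -> c (phi k) <= rm + e.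
    by move=> e e0; have [N HN] := cphi phi sphi e e0; exists N => k Nk; apply: ltW; apply: HN.
  have [r [Rxp [rrm est]]] := key_lsc hlambda Q0 Qlsc hxp hv hc' hC'.
  have Rxp' : Rg xp = r%:E by exact: Rxp.
  have rmr : rm <= r by have := xmmin xp Axp; rewrite Rxm Rxp' lee_fin.
  split.
    split => // z' Az'; rewrite Rxp'.
    apply: (@le_trans _ _ rm%:E); first by rewrite lee_fin.
    by rewrite -Rxm; exact: xmmin.
  have rr : r = rm by apply/eqP; rewrite eq_le rrm rmr.
  split; first by rewrite Rxp' rr.
  move=> e e0.
  have [N1 HN1] := est e e0; have [N2 HN2] := cphi phi sphi e e0.
  exists (maxn N1 N2) => k; rewrite geq_max => /andP [k1 k2].
  have := HN1 k k1; have := HN2 k k2; have := s_le (phi k); rewrite /= -/(s (phi k)) rr.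
  move=> h1 h2 h3; rewrite ltr_distl; apply/andP; split; lra.
have toE : forall (t : nat -> R) L, seqcv t L -> (fun k => (t k)%:E) @ \oo --> L%:E.
  move=> t L /seqcvP ht; apply: cvg_EFin; last exact: ht.
  by apply: nearW => k.
split.
  have [phi [sphi [x hx]]] := weak_compact IPX xsb.
  by exists x, phi; split.
split.
  move=> phi xp sphi hxp; have [mxp [Rxp sc]] := core phi xp sphi hxp.
  split => //.
  have -> : (fun k => regul (Phid (delta (phi k))) lambda Q (xs (phi k))) = (fun k => (s (phi k))%:E).
    by apply/funext => k; rewrite Rn_eq.
  rewrite Rxp.
  exact: toE.
move=> xp mxp uniq.
have Rxp : Rg xp = rm%:E.
  apply/eqP; rewrite eq_le; apply/andP; split.
    by rewrite -Rxm; apply: mxp.2.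
  by rewrite -Rxm; apply: xmmin; case: mxp.
have sub : forall phi, strict phi -> exists psi, strict psi /\
    weak_cvg IPX (xs \o (phi \o psi)) xp /\ seqcv (fun k => s (phi (psi k))) rm.
  move=> phi sphi.
  have [psi [spsi [z hz]]] := weak_compact IPX (u := xs \o phi) (fun n => xsb (phi n)).
  have [mz [_ sc]] := core (phi \o psi) z (strict_comp sphi spsi) hz.
  have zx := uniq z mz; rewrite zx in hz.
  by exists psi.
split.
  move=> h; apply/seqcvP; apply: subseq_principle => phi sphi.
  have [psi [spsi [hw _]]] := sub phi sphi; exists psi; split => //.
  exact/seqcvP/hw.
have -> : (fun n => regul (Phid (delta n)) lambda Q (xs n)) = (fun n => (s n)%:E).
  by apply/funext => n; rewrite Rn_eq.
rewrite Rxp.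
apply: toE; apply: subseq_principle => phi sphi.
by have [psi [spsi [_ sc]]] := sub phi sphi; exists psi.
Qed.
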